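(* Let $G\in\mathbb{F}_q^{m\times n}$ have rank $m\le n$, and let $\mathcal{X}$ be a $k$-dimensional affine source over $\mathbb{F}_q^n$, i.e. uniform on $a+V$ for a $k$-dimensional subspace $V\subseteq\mathbb{F}_q^n$ and $a\in\mathbb{F}_q^n$, such that for $X\sim\mathcal{X}$ the distribution of $G\cdot X^\top$ has entropy at least $k'\log q$ (i.e., the linear map defined by $G$ is a $(k\log q)\to_0(k'\log q)$ condenser for $\mathcal{X}$). Let $H\in\mathbb{F}_q^{(n-m)\times n}$ have rank $n-m$ and satisfy $GH^\top=0$, and let $\mathcal{Y}$ be the $(n-k)$-dimensional affine source uniform on $b+V^\perp$ for some $b\in\mathbb{F}_q^n$, where $V^\perp=\{y\in\mathbb{F}_q^n: y\cdot v^\top=0\ \forall v\in V\}$. Then for $Y\sim\mathcal{Y}$, the distribution of $H\cdot Y^\top$ has entropy at least $(n-k+k'-m)\log q$.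
   Context: Logarithms are base 2. The image of an affine source under a linear map is uniform on an affine subspace, so its (Shannon and min-) entropy equals $\log_2$ of the size of that affine subspace. *)

(* Defs.v *)
From HB Require Import structures.
From mathcomp Require Import all_boot all_order all_algebra.
From mathcomp Require Import reals exp.
Set Implicit Arguments. Unset Strict Implicit. Unset Printing Implicit Defensive.
Import Order.TTheory GRing.Theory Num.Theory.
Local Open Scope ring_scope.

Definition log2 {R : realType} (x : R) : R := ln x / ln 2.

(* Shannon entropy (base 2) of the distribution of [f X] when [X] is
   uniform on the nonempty finite set [S]; convention 0 log 0 = 0. *)
Definition pushforward_prob {R : realType} {T U : finType}
  (S : {set T}) (f : T -> U) (y : U) : R :=
  #|[set x in S | f x == y]|%:R / #|S|%:R.

Definition entropy_uniform_image {R : realType} {T U : finType}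
  (S : {set T}) (f : T -> U) : R :=
  - \sum_(y : U | pushforward_prob (R:=R) S f y != 0)
      pushforward_prob (R:=R) S f y * log2 (pushforward_prob (R:=R) S f y).

(* Vectors of F_q^n are row vectors 'rV[F]_n; a subspace V is the row space
   of a square matrix V : 'M[F]_n, membership (v <= V)%MS, dimension \rank V. *)
Definition subspace_set {F : finFieldType} {n : nat} (V : 'M[F]_n)
  : {set 'rV[F]_n} := [set v : 'rV[F]_n | (v <= V)%MS].

Definition affine_set {F : finFieldType} {n : nat} (a : 'rV[F]_n) (V : 'M[F]_n)
  : {set 'rV[F]_n} := [set a + v | v in subspace_set V].

Definition perp_set {F : finFieldType} {n : nat} (V : 'M[F]_n)
  : {set 'rV[F]_n} :=
  [set y : 'rV[F]_n | [forall v : 'rV[F]_n, (v <= V)%MS ==> (y *m v^T == 0)]].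

(* Main.v *)
Require Import Defs.
From HB Require Import structures.
From mathcomp Require Import all_boot all_order all_algebra.
From mathcomp Require Import reals exp.
From mathcomp Require Import ring lra zify.
Import Order.TTheory GRing.Theory Num.Theory.
Local Open Scope ring_scope.

Lemma card_subspace (F : finFieldType) n (U : 'M[F]_n) :
  #|subspace_set U| = (#|F| ^ \rank U)%N.
Proof.
have inj : injective (fun w : 'rV[F]_(\rank U) => w *m row_base U).
  exact: row_free_inj (row_base_free U).
have -> : subspace_set U = [set w *m row_base U | w in [set: 'rV[F]_(\rank U)]].
  apply/setP => v; rewrite inE; apply/idP/imsetP.
    by rewrite -(eq_row_base U) => /submxP[w ->]; exists w; rewrite ?inE.
  by move=> [w _ ->]; rewrite -(eq_row_base U) submxMl.
by rewrite card_imset // cardsT card_mx mul1n.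
Qed.

Lemma perp_setE (F : finFieldType) n (V : 'M[F]_n) :
  perp_set V = subspace_set (kermx V^T).
Proof.
apply/setP => y; rewrite !inE sub_kermx; apply/forallP/idP.
  move=> H; apply/eqP/rowP => i; rewrite mxE.
  have := H (row i V); rewrite row_sub /= => /eqP /matrixP /(_ ord0 ord0).
  rewrite !mxE => h; rewrite -[RHS]h; by apply: eq_bigr => j _; rewrite !mxE; congr (y _ j * _); apply: val_inj.
move=> /eqP H v; apply/implyP => /submxP[w ->].
by rewrite trmx_mul mulmxA H mul0mx.
Qed.
Lemma fiber_card (F : finFieldType) p n (M : 'M[F]_(p,n)) (U : 'M[F]_n) (a : 'rV[F]_n) y :
  let S := [set a + v | v in subspace_set U] in
  #|[set x in S | M *m x^T == y]| = 0%N \/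
  #|[set x in S | M *m x^T == y]| = #|subspace_set (U :&: kermx M^T)%MS|.
Proof.
move=> S.
have fD : forall x w : 'rV[F]_n, M *m (x + w)^T = M *m x^T + M *m w^T.
  by move=> x w; rewrite linearD /= mulmxDr.
have f0 : forall w : 'rV[F]_n, (M *m w^T == 0) = (w *m M^T == 0).
  move=> w; rewrite -[M]trmxK -trmx_mul trmxK -trmx0; apply/eqP/eqP => [/trmx_inj|->] //.
case: (set_0Vmem [set x in S | M *m x^T == y]) => [->|[x0]]; first by left; rewrite cards0.
rewrite inE => /andP[/imsetP[u0 hu0 ->] /eqP hy]; right; rewrite inE in hu0.
have -> : [set x in S | M *m x^T == y] =
    [set (a + u0) + w | w in subspace_set (U :&: kermx M^T)%MS].
  apply/setP => x; rewrite inE; apply/andP/imsetP.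
    move=> [/imsetP[u hu ->] /eqP hx]; exists (u - u0).
      rewrite !inE sub_capmx sub_kermx -f0; rewrite inE in hu.
      rewrite addmx_sub ?eqmx_opp //=.
      rewrite linearB /= mulmxBr subr_eq0; rewrite fD in hx; rewrite fD in hy.
      by apply/eqP; apply: (addrI (M *m a^T)); rewrite hx hy.
    by rewrite [u - u0]addrC addrA addrK.
  move=> [w]; rewrite inE sub_capmx sub_kermx => /andP[hw hk] ->; split.
    by apply/imsetP; exists (u0 + w); rewrite ?inE ?addmx_sub // addrA.
  rewrite fD hy; move: hk; rewrite -f0 => /eqP ->; by rewrite addr0.
by rewrite (card_imset _ (addrI (a + u0))).
Qed.

Lemma entropy_affine (R : realType) (F : finFieldType) p n (M : 'M[F]_(p,n))
  (U : 'M[F]_n) (a : 'rV[F]_n) :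
  entropy_uniform_image (R:=R) [set a + v | v in subspace_set U] (fun x => M *m x^T)
  = (\rank U - \rank (U :&: kermx M^T)%MS)%:R * log2 (#|F|%:R : R).
Proof.
set S := [set a + v | v in subspace_set U].
set K := (U :&: kermx M^T)%MS.
set fib := fun y => [set x in S | M *m x^T == y].
have hN : #|S| = (#|F| ^ \rank U)%N by rewrite card_imset ?card_subspace //; apply: addrI.
have hc : #|subspace_set K| = (#|F| ^ \rank K)%N by rewrite card_subspace.
have q0 : (0 < #|F|)%N by apply/card_gt0P; exists 0.
have hfib : forall y, #|fib y| = 0%N \/ #|fib y| = #|subspace_set K| by move=> y; apply: fiber_card.
have Npos : (0 < #|S|)%N by rewrite hN expn_gt0 q0.
have cpos : (0 < #|subspace_set K|)%N by rewrite hc expn_gt0 q0.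
have hsum : #|S| = (#|subspace_set K| * #|[pred y | #|fib y| != 0%N]|)%N.
  rewrite -sum1_card (partition_big (fun x => M *m x^T) predT) //=.
  rewrite (bigID (fun y => #|fib y| != 0%N)) /= [X in (_ + X)%N]big1; last first.
    by move=> y /negbNE/eqP h; rewrite sum1_card -[RHS]h; apply: eq_card => x; rewrite !inE.
  rewrite addn0 mulnC -sum_nat_const; apply: eq_bigr => y hy.
  rewrite sum1_card; have [h|h] := hfib y; first by rewrite h in hy.
  rewrite -[RHS]h.
  by apply: eq_card => x; rewrite !inE.
set c := #|subspace_set K|; set Y := #|[pred y | #|fib y| != 0%N]|.
rewrite /entropy_uniform_image.
have e1 : forall y, (pushforward_prob (R:=R) S (fun x => M *m x^T) y != 0) = (#|fib y| != 0%N).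
  move=> y; rewrite /pushforward_prob mulf_eq0 invr_eq0 !pnatr_eq0 negb_or -[(#|S| != 0)%N]lt0n Npos andbT.
  by [].
rewrite (eq_bigl _ _ e1).
have e2 : forall y, #|fib y| != 0%N ->
  pushforward_prob (R:=R) S (fun x => M *m x^T) y * log2 (pushforward_prob (R:=R) S (fun x => M *m x^T) y)
  = (c%:R / #|S|%:R) * log2 (c%:R / #|S|%:R : R).
  move=> y hy; have [h|h] := hfib y; first by rewrite h in hy.
  by rewrite /pushforward_prob -/(fib y) h.
rewrite (eq_bigr _ e2) sumr_const.
rewrite -/Y.
have qp : (0 : R) < #|F|%:R by rewrite ltr0n.
have hl : log2 (c%:R / #|S|%:R : R) = (\rank K)%:R * log2 (#|F|%:R : R) - (\rank U)%:R * log2 (#|F|%:R : R).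
  rewrite /log2 /c hc hN !natrX lnM ?posrE ?invr_gt0 ?exprn_gt0 // lnV ?posrE ?exprn_gt0 // !lnXn //.
  by rewrite !mulr_natl mulrBl !mulrnAl.
have rKU : (\rank K <= \rank U)%N by rewrite mxrankS // capmxSl.
have Y0 : (Y%:R != 0 :> R).
  by move: Npos; rewrite hsum muln_gt0 pnatr_eq0 => /andP[_]; rewrite lt0n.
have c0 : (c%:R != 0 :> R) by rewrite pnatr_eq0 -lt0n.
rewrite hl hsum -/c -/Y natrM natrB // -[_ *+ Y]mulr_natr.
by field; rewrite Y0 c0.
Qed.

Theorem mainTheorem19 (R : realType) (F : finFieldType) (m n k k' : nat)
  (G : 'M[F]_(m, n)) (H : 'M[F]_(n - m, n)) (V : 'M[F]_n) (a b : 'rV[F]_n) :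
  (m <= n)%N ->
  \rank G = m ->
  \rank V = k ->
  k'%:R * log2 (#|F|%:R : R) <=
    entropy_uniform_image (R:=R) (affine_set a V) (fun x => G *m x^T) ->
  \rank H = (n - m)%N ->
  G *m H^T = 0 ->
  (n%:R - k%:R + k'%:R - m%:R) * log2 (#|F|%:R : R) <=
    entropy_uniform_image (R:=R) [set b + y | y in perp_set V]
      (fun y => H *m y^T).
Proof.
move=> hmn hG hV hent hH hGH.
have q1 : (1 < #|F|)%N.
  apply/card_gt1P; exists 0, 1; split => //; rewrite eq_sym; exact: oner_neq0.
have Lp : 0 < log2 (#|F|%:R : R).
  by rewrite /log2 divr_gt0 // ln_gt0 // ltr1n.
rewrite /affine_set entropy_affine ler_pM2r // ler_nat in hent.
rewrite perp_setE entropy_affine.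
set r1 := \rank (V :&: kermx G^T)%MS in hent.
set d2 := \rank (kermx V^T :&: kermx H^T)%MS.
have e1 := mxrank_mul_ker V G^T; rewrite -/r1 hV in e1.
have hW : (kermx H^T :=: G)%MS.
  apply: eqmx_sym; apply/eqmxP; rewrite -(mxrank_leqif_eq _).2.
    by rewrite mxrank_ker mxrank_tr hH hG subKn.
  by rewrite sub_kermx hGH.
have hd2 : d2 = \rank (G :&: kermx V^T)%MS.
  by rewrite /d2 (cap_eqmx (eqmx_refl _) hW) capmxC.
have e2 := mxrank_mul_ker G V^T; rewrite -hd2 hG in e2.
rewrite hV in hent.
have e3 : \rank (G *m V^T) = \rank (V *m G^T).
  by rewrite -mxrank_tr trmx_mul trmxK.
have hk : \rank (kermx V^T) = (n - k)%N by rewrite mxrank_ker mxrank_tr hV.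
have kn : (k <= n)%N by rewrite -hV rank_leq_col.
have d2le : (d2 <= n - k)%N by rewrite -hk mxrankS // capmxSl.
rewrite hk ler_pM2r // natrB // natrB //.
have hh : (k' + d2 <= m)%N.
  rewrite e3 in e2; rewrite -e1 addnK in hent.
  by rewrite -e2 leq_add2r.
move: hh; rewrite -(ler_nat R) natrD => hh; lra.
Qed.
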